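(* Let $\mathcal V$ be a finite set of variables, $\mathcal P$ a finite set of labels, and $\mathcal C$ a finite set of nonempty subsets (hyperedges) of $\mathcal V$. For each $C\in\mathcal C$ let $\mathcal D_C\subseteq\mathcal P^C$ be a set of labelings of $C$ and let $\hat\theta_{C,\vec d}\le 0$ for $\vec d\in\mathcal D_C$, defining the sparse pattern-based potential $\theta_C(\vec x_C)=\hat\theta_{C,\vec d}$ if $\vec x_C=\vec d\in\mathcal D_C$ and $\theta_C(\vec x_C)=0$ otherwise. For binary variables $y_{ip}\in\{0,1\}$ ($i\in\mathcal V,p\in\mathcal P$) and $z_{C,\vec d}\in\{0,1\}$ ($C\in\mathcal C,\vec d\in\mathcal D_C$) let $$E^*_I(\vec y,\vec z)=-\sum_{C\in\mathcal C}\sum_{\vec d\in\mathcal D_C}\hat\theta_{C,\vec d}\Big((|C|-1)z_{C,\vec d}-\sum_{\ell\in C}y_{\ell d_\ell}z_{C,\vec d}\Big),$$ and for $\vec\lambda\in\mathbb R^{\mathcal V}$ let $D(\vec\lambda)=\min_{\vec y,\vec z\text{ binary}}\Big(E^*_I(\vec y,\vec z)+\sum_{i\in\mathcal V}\lambda_i\big(\sum_{p\in\mathcal P}y_{ip}-1\big)\Big)$. Then $\max_{\vec\lambda\in\mathbb R^{\mathcal V}}D(\vec\lambda)$ equals the optimal value of the linear program $$\min_{\vec y}\ \sum_{C\in\mathcal C}\sum_{\vec d\in\mathcal D_C}\hat\theta_{C,\vec d}\,y_{C,\vec d}$$ subject to $y_{ip}\in[0,1]$ for all $i\in\mathcal V,p\in\mathcal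 P$; $y_{C,\vec d}\in[0,1]$ for all $C\in\mathcal C,\vec d\in\mathcal D_C$; $y_{C,\vec d}\le y_{\ell d_\ell}$ for all $C\in\mathcal C$, $\vec d\in\mathcal D_C$, $\ell\in C$; and $\sum_{p\in\mathcal P}y_{ip}=1$ for all $i\in\mathcal V$.
   Context: A labeling $\vec d\in\mathcal P^C$ of a hyperedge $C$ is a map $C\to\mathcal P$, and $d_\ell$ denotes its value at $\ell\in C$. The energy to be minimized is $E(\vec x)=\sum_{C\in\mathcal C}\theta_C(\vec x_C)$ over $\vec x\in\mathcal P^{\mathcal V}$; $y_{ip}$ are indicator variables of $x_i=p$, $E^*_I$ is a pairwise reformulation of the energy with auxiliary binary variables $z_{C,\vec d}$, and $D$ is the Lagrangian dual obtained by relaxing the consistency constraints $\sum_p y_{ip}=1$. *)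

(* Defs.v *)
From mathcomp Require Import all_boot all_order all_algebra.
From mathcomp Require Import reals.
Set Implicit Arguments. Unset Strict Implicit. Unset Printing Implicit Defensive.
Import Order.TTheory GRing.Theory Num.Theory.
Local Open Scope ring_scope.

Definition lab (V P : finType) (C : {set V}) := {ffun {i : V | i \in C} -> P}.

(* index type for the auxiliary variables z_{C,d} *)
Definition zidx (V P : finType) := {C : {set V} & lab P C}.

Definition b2r (R : realType) (b : bool) : R := (nat_of_bool b)%:R.

Section Defs.
Variables (R : realType) (V P : finType) (Cs : {set {set V}})
  (Dset : forall C : {set V}, {set lab P C})
  (th : forall C : {set V}, lab P C -> R).

Definition Estar (y : {ffun V * P -> bool}) (z : {ffun zidx V P -> bool}) : R :=
  - \sum_(C in Cs) \sum_(d in Dset C)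
      th d * ((#|C|%:R - 1) * b2r R (z (Tagged (fun C => lab P C) d))
              - \sum_(l : {i : V | i \in C})
                  b2r R (y (val l, d l)) * b2r R (z (Tagged (fun C => lab P C) d))).

Definition lagr (lam : V -> R) (y : {ffun V * P -> bool})
    (z : {ffun zidx V P -> bool}) : R :=
  Estar y z + \sum_(i : V) lam i * (\sum_(p : P) b2r R (y (i, p)) - 1).

Definition is_D_value (lam : V -> R) (m : R) : Prop :=
  (exists y z, lagr lam y z = m) /\ (forall y z, m <= lagr lam y z).

Definition lp_feasible (yl : V -> P -> R) (yc : forall C : {set V}, lab P C -> R)
    : Prop :=
  (forall i p, 0 <= yl i p <= 1) /\
  (forall C d, C \in Cs -> d \in Dset C -> 0 <= yc C d <= 1) /\
  (forall C d, C \in Cs -> d \in Dset C ->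
     forall l : {i : V | i \in C}, yc C d <= yl (val l) (d l)) /\
  (forall i, \sum_(p : P) yl i p = 1).

Definition lp_obj (yc : forall C : {set V}, lab P C -> R) : R :=
  \sum_(C in Cs) \sum_(d in Dset C) th d * yc C d.

End Defs.

(* Main.v *)
Require Import Defs.
From mathcomp Require Import all_boot all_order all_algebra.
From mathcomp Require Import reals ring lra zify.
Set Implicit Arguments. Unset Strict Implicit. Unset Printing Implicit Defensive.
Import Order.TTheory GRing.Theory Num.Theory.
Local Open Scope ring_scope.

Section FM.
Variables (R : realFieldType) (I : finType).

Lemma sum_ind (K : finType) (j : K) (f : K -> R) :
  \sum_k (j == k)%:R * f k = f j.
Proof.
rewrite (bigD1 j) //= eqxx mul1r big1 ?addr0 // => k /negbTE.
by rewrite eq_sym => ->; rewrite mul0r.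
Qed.

Definition upd (l : I -> R) (x : I) (s : R) : I -> R :=
  fun i => if i == x then s else l i.

Lemma sum_upd (A : {set I}) x (xA : x \in A) (b : I -> R) l s :
  \sum_(i in A) b i * upd l x s i = b x * s + \sum_(i in A :\ x) b i * l i.
Proof.
rewrite (big_setD1 x xA) /= /upd eqxx; congr (_ + _).
by apply: eq_bigr => i; rewrite !inE => /andP[/negbTE -> _].
Qed.


Variables (K : finType) (a : K -> R) (b : K -> I -> R) (x : I).

Definition bet k := b k x.
Definition okp (p : K * K) : bool :=
  ((bet p.1 == 0) && (p.1 == p.2)) || ((0 < bet p.1) && (bet p.2 < 0)).
Definition Kp := {p : K * K | okp p}.
Definition c1 (p : K * K) : R :=
  if bet p.1 == 0 then 1 else - bet p.2 / (bet p.1 - bet p.2).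
Definition c2 (p : K * K) : R :=
  if bet p.1 == 0 then 0 else bet p.1 / (bet p.1 - bet p.2).
Definition a' (p : Kp) := c1 (val p) * a (val p).1 + c2 (val p) * a (val p).2.
Definition b' (p : Kp) i := c1 (val p) * b (val p).1 i + c2 (val p) * b (val p).2 i.

Lemma c_prop (p : Kp) : [/\ 0 <= c1 (val p), 0 <= c2 (val p), c1 (val p) + c2 (val p) = 1
   & c1 (val p) * bet (val p).1 + c2 (val p) * bet (val p).2 = 0].
Proof.
case: p => [[k j]] /= /orP[/andP[/eqP h0 _]|/andP[hk hj]];
  rewrite /c1 /c2 /=; first by rewrite h0 eqxx ler01 lexx addr0 mulr0 mul0r addr0.
have -> : (bet k == 0) = false by rewrite gt_eqF.
have he : 0 < bet k - bet j by rewrite subr_gt0 (lt_trans hj).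
split.
- by rewrite divr_ge0 // ?oppr_ge0 ?ltW.
- by rewrite divr_ge0 // ltW.
- by field; rewrite gt_eqF.
- by field; rewrite gt_eqF.
Qed.


Variable (A : {set I}) (xA : x \in A).
Let g (l : I -> R) k := a k + \sum_(i in A :\ x) b k i * l i.

Lemma aff_p l (p : Kp) :
  a' p + \sum_(i in A :\ x) b' p i * l i = c1 (val p) * g l (val p).1 + c2 (val p) * g l (val p).2.
Proof.
rewrite /a' /b' /g !mulrDr addrACA; congr (_ + _).
rewrite !mulr_sumr -big_split /=; apply: eq_bigr => i _; ring.
Qed.

Lemma lift l T : (forall p : Kp, T <= a' p + \sum_(i in A :\ x) b' p i * l i) ->
  exists s, forall k, T <= a k + \sum_(i in A) b k i * upd l x s i.
Proof.
move=> H.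
have H0 k : bet k = 0 -> T <= g l k.
  move=> hk; have okk : okp (k, k) by rewrite /okp /= hk !eqxx.
  have := H (exist _ (k, k) okk); rewrite aff_p /c1 /c2 /= hk eqxx.
  by rewrite mul1r mul0r addr0.
have H2 k j : 0 < bet k -> bet j < 0 -> T - g l j <= bet j * ((T - g l k) / bet k).
  move=> hk hj; have okk : okp (k, j) by rewrite /okp /= hk hj orbT.
  have := H (exist _ (k, j) okk); rewrite aff_p /c1 /c2 /=.
  have -> : (bet k == 0) = false by rewrite gt_eqF.
  have he : 0 < bet k - bet j by rewrite subr_gt0 (lt_trans hj).
  rewrite mulrA ler_pdivlMr //.
  have -> : - bet j / (bet k - bet j) * g l k + bet k / (bet k - bet j) * g l j
     = (- bet j * g l k + bet k * g l j) / (bet k - bet j) by field; rewrite gt_eqF.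
  rewrite ler_pdivlMr // => h; nra.
suff [s Hs] : exists s, forall k, T <= g l k + bet k * s.
  exists s => k; rewrite (sum_upd xA) addrCA addrC; exact: Hs.
case: (pickP (fun k => 0 < bet k)) => [k0 Hk0 | noP].
  case: (@arg_maxP _ _ _ k0 (fun k => 0 < bet k) (fun k => (T - g l k) / bet k) Hk0) => km Pkm Hkm.
  exists ((T - g l km) / bet km) => k.
  case: (ltrgtP 0 (bet k)) => hk.
  - have /= := Hkm k hk; rewrite ler_pdivrMr // => h; rewrite -lerBlDl; nra.
  - have := H2 km k Pkm hk => h; rewrite -lerBlDl; nra.
  - by rewrite -hk mul0r addr0; apply: H0.
case: (pickP (fun k => bet k < 0)) => [j0 Hj0 | noN].
  case: (@arg_minP _ _ _ j0 (fun k => bet k < 0) (fun k => (T - g l k) / bet k) Hj0) => km Pkm Hkm.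
  exists ((T - g l km) / bet km) => k.
  case: (ltrgtP 0 (bet k)) => hk.
  - by move: (noP k); rewrite hk.
  - have /= := Hkm k hk; rewrite ler_ndivlMr // => h; rewrite -lerBlDl; nra.
  - by rewrite -hk mul0r addr0; apply: H0.
exists 0 => k; rewrite mulr0 addr0; apply: H0.
case: (ltrgtP 0 (bet k)) => // hk; [by move: (noP k); rewrite hk | by move: (noN k); rewrite hk].
Qed.

End FM.

Section FMmain.
Variables (R : realFieldType) (I : finType).

Lemma sum_mix (K : finType) (Q : finType) (mu : Q -> R) (c1 c2 : Q -> R) (p1 p2 : Q -> K) (f : K -> R) :
  \sum_k (\sum_p mu p * (c1 p * (p1 p == k)%:R + c2 p * (p2 p == k)%:R)) * f k
  = \sum_p mu p * (c1 p * f (p1 p) + c2 p * f (p2 p)).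
Proof.
under eq_bigr do rewrite mulr_suml.
rewrite exchange_big /=; apply: eq_bigr => p _.
transitivity (\sum_k (mu p * (c1 p * ((p1 p == k)%:R * f k) + c2 p * ((p2 p == k)%:R * f k)))).
  by apply: eq_bigr => k _; ring.
by rewrite -mulr_sumr big_split /= -!mulr_sumr !sum_ind.
Qed.

Lemma FM n : forall (A : {set I}), #|A| = n -> forall (K : finType) (a : K -> R) (b : K -> I -> R), (0 < #|K|)%N ->
  (forall M, exists l : I -> R, forall k, M <= a k + \sum_(i in A) b k i * l i) \/
  (exists (l : I -> R) (mu : K -> R), (forall k, 0 <= mu k) /\ \sum_k mu k = 1 /\
      (forall i, i \in A -> \sum_k mu k * b k i = 0) /\
      forall k, \sum_k' mu k' * a k' <= a k + \sum_(i in A) b k i * l i).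
Proof.
elim: n => [|n IH] A hA K a b hK.
  right; move/eqP: hA; rewrite cards_eq0 => /eqP ->.
  case/card_gt0P: hK => k0 _.
  case: (@arg_minP _ _ _ k0 predT a isT) => km _ Hkm.
  exists (fun _ => 0), (fun k => (km == k)%:R); split; [|split; [|split]].
  - by move=> k; rewrite ler0n.
  - by rewrite (bigD1 km) //= eqxx big1 ?addr0 // => k /negbTE; rewrite eq_sym => ->.
  - by move=> i; rewrite inE.
  - by move=> k; rewrite sum_ind big_set0 addr0; apply: Hkm.
have [x xA] : exists x, x \in A by apply/card_gt0P; rewrite hA.
have hA' : #|A :\ x| = n by move: hA; rewrite (cardsD1 x) xA => -[].
have key := @lift R I K a b x A xA.
case: (posnP #|{: Kp b x}|) => hKp.
  left => M; have [s Hs] : exists s, forall k, M <= a k + \sum_(i in A) b k i * upd (fun _ => 0) x s i.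
    by apply: key => p; move: (card0_eq hKp p); rewrite inE.
  by exists (upd (fun _ => 0) x s).
case: (IH (A :\ x) hA' (Kp b x) (@a' R I K a b x) (@b' R I K b x) hKp) => [Hl|[l [mu [mu0 [mu1 [mub mua]]]]]].
  left => M; have [l Hl'] := Hl M; have [s Hs] := key l M Hl'.
  by exists (upd l x s).
have [s Hs] := key l (\sum_p mu p * @a' R I K a b x p) mua.
right; exists (upd l x s), (fun k => \sum_p mu p * (c1 b x (val p) * ((val p).1 == k)%:R + c2 b x (val p) * ((val p).2 == k)%:R)).
split; [|split; [|split]].
- move=> k; apply: sumr_ge0 => p _; have [h1 h2 _ _] := c_prop p.
  by apply: mulr_ge0 => //; apply: addr_ge0; apply: mulr_ge0 => //; rewrite ler0n.
- transitivity (\sum_k (\sum_p mu p * (c1 b x (val p) * ((val p).1 == k)%:R + c2 b x (val p) * ((val p).2 == k)%:R)) * 1).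
    by apply: eq_bigr => k _; rewrite mulr1.
  rewrite sum_mix -[RHS]mu1; apply: eq_bigr => p _; have [_ _ h _] := c_prop p.
  by rewrite !mulr1 h mulr1.
- move=> i iA; rewrite sum_mix.
  case: (eqVneq i x) => [->|nix].
    by apply: big1 => p _; have [_ _ _ h] := c_prop p; rewrite h mulr0.
  rewrite -[RHS](mub i); last by rewrite !inE nix.
  by apply: eq_bigr => p _.
- move=> k; rewrite sum_mix; exact: Hs.
Qed.

End FMmain.

Section Main.
Variables (R : realType) (V P : finType).

Lemma b2r_ge0 b : 0 <= b2r R b. Proof. by case: b; rewrite /b2r ?ler01 ?lexx. Qed.
Lemma b2r_le1 b : b2r R b <= 1. Proof. by case: b; rewrite /b2r ?ler01 ?lexx. Qed.
Lemma b2rT : b2r R true = 1. Proof. by []. Qed.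
Lemma b2rF : b2r R false = 0. Proof. by []. Qed.

Lemma count_sum (C : {set V}) (f : {i : V | i \in C} -> bool) :
  if [forall l, f l] then \sum_l b2r R (f l) = #|C|%:R
  else \sum_l b2r R (f l) <= #|C|%:R - 1.
Proof.
have E : \sum_l b2r R (f l) = #|[pred l | f l]|%:R.
  rewrite /b2r -natr_sum; congr (_%:R).
  rewrite -sum1_card [RHS]big_mkcond /=; apply: eq_bigr => l _; rewrite inE; by case: (f l).
have cC : #|{: {i : V | i \in C}}| = #|C| by rewrite card_sig.
rewrite E; case: ifP => [/forallP fa | /negbT].
  congr (_%:R); rewrite -cC; apply: eq_card => l; by rewrite !inE fa.
rewrite negb_forall => /existsP[l0 hl0].
have := cardC [pred l | f l]; rewrite cC => hc.
have h1 : (0 < #|[predC [pred l | f l]]|)%N by apply/card_gt0P; exists l0; rewrite !inE.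
rewrite lerBrDr natr1 ler_nat -hc; move: h1; case: #|[predC _]| => // k _; by rewrite addnS ltnS leq_addr.
Qed.


Variables (Cs : {set {set V}}) (Dset : forall C : {set V}, {set lab P C})
  (th : forall C : {set V}, lab P C -> R).

Definition term (C : {set V}) (d : lab P C) (y : {ffun V * P -> bool}) (zb : bool) :=
  - (th d * ((#|C|%:R - 1) * b2r R zb
              - \sum_(l : {i : V | i \in C}) b2r R (y (val l, d l)) * b2r R zb)).

Lemma termE (C : {set V}) (d : lab P C) (y : {ffun V * P -> bool}) zb : term d y zb =
  th d * ((\sum_(l : {i : V | i \in C}) b2r R (y (val l, d l)) - (#|C|%:R - 1)) * b2r R zb).
Proof. by rewrite /term -mulr_suml; ring. Qed.

Lemma T1 C (d : lab P C) (y : {ffun V * P -> bool}) zb : th d <= 0 ->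
  th d * b2r R (zb && [forall l, y (val l, d l)]) <= term d y zb.
Proof.
move=> hth; rewrite termE; apply: ler_wnM2l => //.
have := count_sum (fun l : {i : V | i \in C} => y (val l, d l)).
case: zb => /=; last by rewrite !mulr0.
rewrite mulr1; case: ifP => _ h; first by rewrite h b2rT opprB addrC subrK.
by rewrite b2rF subr_le0.
Qed.

Lemma T2 C (d : lab P C) (y : {ffun V * P -> bool}) :
  term d y [forall l, y (val l, d l)] = th d * b2r R [forall l, y (val l, d l)].
Proof.
rewrite termE; have := count_sum (fun l : {i : V | i \in C} => y (val l, d l)).
case: ifP => _ h; last by rewrite b2rF !mulr0.
by rewrite h b2rT mulr1 opprB addrC subrK.
Qed.

Lemma EstarE y z : Estar Cs Dset th y z =
  \sum_(C in Cs) \sum_(d in Dset C) term d y (z (Tagged (fun C => lab P C) d)).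
Proof.
rewrite /Estar -sumrN; apply: eq_bigr => C _; rewrite -sumrN; apply: eq_bigr => d _.
by [].
Qed.


Definition Psi (lam : V -> R) (x : V * P -> R) (yc : forall C : {set V}, lab P C -> R) :=
  \sum_(C in Cs) \sum_(d in Dset C) th d * yc C d + \sum_i lam i * (\sum_p x (i, p) - 1).

Lemma Psi_ext lam x1 x2 (y1 y2 : forall C : {set V}, lab P C -> R) :
  (forall ip, x1 ip = x2 ip) -> (forall C d, y1 C d = y2 C d) -> Psi lam x1 y1 = Psi lam x2 y2.
Proof.
move=> h1 h2; rewrite /Psi; congr (_ + _).
  by apply: eq_bigr => C _; apply: eq_bigr => d _; rewrite h2.
by apply: eq_bigr => i _; congr (_ * (_ - _)); apply: eq_bigr => p _; rewrite h1.
Qed.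

Lemma Psi_comb lam t u v (uc vc : forall C : {set V}, lab P C -> R) :
  Psi lam (fun ip => t * u ip + (1 - t) * v ip) (fun C d => t * uc C d + (1 - t) * vc C d)
  = t * Psi lam u uc + (1 - t) * Psi lam v vc.
Proof.
rewrite /Psi !mulrDr addrACA; congr (_ + _).
  rewrite !mulr_sumr -big_split; apply: eq_bigr => C _.
  rewrite !mulr_sumr -big_split; apply: eq_bigr => d _ /=; ring.
rewrite !mulr_sumr -big_split; apply: eq_bigr => i _ /=.
rewrite big_split /= -!mulr_sumr; ring.
Qed.

Lemma PsiB lam m : (forall y z, m <= lagr Cs Dset th lam y z) -> forall S : {set V * P},
  m <= Psi lam (fun ip => b2r R (ip \in S))
          (fun C d => b2r R [forall l : {i | i \in C}, (val l, d l) \in S]).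
Proof.
move=> H S.
pose y := [ffun ip : V * P => ip \in S].
pose z := [ffun k : zidx V P => [forall l : {i | i \in tag k}, (val l, tagged k l) \in S]].
have := H y z; rewrite /lagr EstarE /Psi.
have -> : \sum_i lam i * (\sum_p b2r R (y (i, p)) - 1)
        = \sum_i lam i * (\sum_p b2r R ((i, p) \in S) - 1).
  by apply: eq_bigr => i _; congr (_ * (_ - _)); apply: eq_bigr => p _; rewrite ffunE.
suff -> : \sum_(C in Cs) \sum_(d in Dset C) term d y (z (Tagged (fun C => lab P C) d))
   = \sum_(C in Cs) \sum_(d in Dset C) th d * b2r R [forall l : {i | i \in C}, (val l, d l) \in S] by [].
apply: eq_bigr => C _; apply: eq_bigr => d _.
have -> : z (Tagged (fun C => lab P C) d) = [forall l, y (val l, d l)].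
  by rewrite ffunE; apply: eq_forallb => l; rewrite ffunE.
rewrite T2; congr (_ * b2r R _); apply: eq_forallb => l; by rewrite ffunE.
Qed.

Hypothesis hth : forall C (d : lab P C), C \in Cs -> d \in Dset C -> th d <= 0.

Lemma PsiC lam (S : {set V * P}) x (yc : forall C : {set V}, lab P C -> R) :
 (forall ip, x ip = b2r R (ip \in S)) ->
 (forall C d, C \in Cs -> d \in Dset C -> yc C d <= 1 /\ forall l : {i | i \in C}, yc C d <= x (val l, d l)) ->
 Psi lam (fun ip => b2r R (ip \in S))
     (fun C d => b2r R [forall l : {i | i \in C}, (val l, d l) \in S]) <= Psi lam x yc.
Proof.
move=> hx hyc; rewrite /Psi.
have -> : \sum_i lam i * (\sum_p x (i, p) - 1) = \sum_i lam i * (\sum_p b2r R ((i, p) \in S) - 1).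
  by apply: eq_bigr => i _; congr (_ * (_ - _)); apply: eq_bigr => p _; rewrite hx.
rewrite lerD2r; apply: ler_sum => C hC; apply: ler_sum => d hd.
apply: ler_wnM2l; first exact: hth.
have [h1 h2] := hyc C d hC hd.
case: (boolP [forall l : {i | i \in C}, (val l, d l) \in S]) => [_|/forallPn [l hl]]; first by rewrite b2rT.
by have := h2 l; rewrite hx (negbTE hl) b2rF.
Qed.

Lemma xoffL (x : V * P -> R) : (forall ip, 0 <= x ip <= 1) ->
  forall ip, ip \notin [set ip | (0 < x ip)%R] -> x ip = 0.
Proof.
by move=> hx ip; rewrite inE => h0; have /andP[a _] := hx ip; apply/eqP; rewrite eq_le a andbT leNgt h0.
Qed.

Lemma round_bin lam m : (forall y z, m <= lagr Cs Dset th lam y z) ->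
  forall (x : V * P -> R) (yc : forall C : {set V}, lab P C -> R),
  (forall ip, 0 <= x ip <= 1) ->
  (forall C d, C \in Cs -> d \in Dset C -> yc C d <= 1 /\ forall l : {i | i \in C}, yc C d <= x (val l, d l)) ->
  [forall (ip | ip \in [set ip | (0 < x ip)%R]), x ip == 1] -> m <= Psi lam x yc.
Proof.
move=> H x yc hx hyc /forall_inP hb.
have hx' : forall ip, x ip = b2r R (ip \in [set ip | (0 < x ip)%R]).
  move=> ip; case: (boolP (ip \in [set ip | (0 < x ip)%R])) => ipS.
    by rewrite b2rT; apply/eqP/hb.
  by rewrite b2rF xoffL.
exact: le_trans (PsiB H _) (PsiC lam hx' hyc).
Qed.

Lemma round lam m : (forall y z, m <= lagr Cs Dset th lam y z) -> forall n (x : V * P -> R) (yc : forall C : {set V}, lab P C -> R),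
  (#|[set ip | (0 < x ip)%R]| <= n)%N -> (forall ip, 0 <= x ip <= 1) ->
  (forall C d, C \in Cs -> d \in Dset C -> yc C d <= 1 /\ forall l : {i | i \in C}, yc C d <= x (val l, d l)) ->
  m <= Psi lam x yc.
Proof.
move=> H n; elim: n => [|n IH] x yc hS hx hyc.
  case: (boolP [forall (ip | ip \in [set ip | (0 < x ip)%R]), x ip == 1]) => [hb|/forall_inPn [j jS hj]].
    exact: round_bin.
  by move: hS; rewrite leqn0 cards_eq0 => /eqP S0; rewrite S0 inE in jS.
case: (boolP [forall (ip | ip \in [set ip | (0 < x ip)%R]), x ip == 1]) => [hb|/forall_inPn [j jS hj]].
  exact: round_bin.
set S := [set ip | (0 < x ip)%R] in hS jS *.
have xoff := xoffL hx.
case: (@arg_minP _ _ _ j (mem S) x jS) => jm jmS0 hjm.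
have jmS : jm \in S := jmS0.
set t := x jm.
have t0 : 0 < t by move: jmS; rewrite /S inE.
have t1 : t < 1.
  have /andP[_ xj1] := hx j.
  have xj : x j < 1 by rewrite lt_neqAle hj xj1.
  exact: le_lt_trans (hjm j jS) xj.
have ut : 0 < 1 - t by rewrite subr_gt0.
pose x' := fun ip => (x ip - t * b2r R (ip \in S)) / (1 - t).
pose cS := fun C (d : lab P C) => b2r R [forall l : {i | i \in C}, (val l, d l) \in S].
pose yc' := fun C d => (yc C d - t * cS C d) / (1 - t).
have E : Psi lam x yc = t * Psi lam (fun ip => b2r R (ip \in S)) cS + (1 - t) * Psi lam x' yc'.
  rewrite -Psi_comb; apply: Psi_ext => [ip|C d]; rewrite /x' /yc'; field; by rewrite (gt_eqF ut).
have hx' : forall ip, 0 <= x' ip <= 1.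
  move=> ip; rewrite /x'; case: (boolP (ip \in S)) => ipS.
    have /andP[_ h1] := hx ip; have h0 := hjm ip ipS.
    rewrite b2rT mulr1; apply/andP; split.
      by apply: divr_ge0; [rewrite subr_ge0 | exact: ltW].
    by rewrite ler_pdivrMr // mul1r lerD2r.
  by rewrite xoff // b2rF mulr0 subrr mul0r lexx ler01.
rewrite E.
have hI : m <= Psi lam x' yc'.
  apply: IH => //.
  - have sub : [set ip | 0 < x' ip] \proper S.
      apply/properP; split.
        apply/subsetP => ip; rewrite !inE => h; apply: contraLR h => h0.
        have xi0 : x ip = 0 by apply: xoff; rewrite inE.
        by rewrite /x' xi0 inE (negbTE h0) b2rF mulr0 subrr mul0r ltxx.
      by exists jm => //; rewrite inE /x' jmS b2rT mulr1 subrr mul0r ltxx.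
    by rewrite -ltnS; exact: leq_trans (proper_card sub) hS.
  - move=> C d hC hd; have [h1 h2] := hyc C d hC hd; rewrite /yc' /cS.
    case: (boolP [forall l : {i | i \in C}, (val l, d l) \in S]) => [/forallP fa | /forallPn [l0 hl0]].
      rewrite b2rT mulr1; split.
        by rewrite ler_pdivrMr // mul1r lerD2r.
      move=> l; rewrite /x' fa b2rT mulr1 ler_pM2r ?invr_gt0 // lerD2r; exact: h2.
    have yc0 : yc C d <= 0 by have := h2 l0; rewrite xoff.
    rewrite b2rF mulr0 subr0; split.
      by apply: (le_trans _ ler01); rewrite pmulr_lle0 ?invr_gt0.
    move=> l; have /andP[h _] := hx' (val l, d l).
    by apply: (le_trans _ h); rewrite pmulr_lle0 ?invr_gt0.
have -> : m = t * m + (1 - t) * m by ring.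
apply: lerD; apply: ler_wpM2l => //; [exact: ltW | exact: PsiB | exact: ltW].
Qed.

End Main.
Unset Implicit Arguments.

Theorem theorem5 (R : realType) (V P : finType) (Cs : {set {set V}})
  (Dset : forall C : {set V}, {set lab P C})
  (th : forall C : {set V}, lab P C -> R)
  (hP : (0 < #|P|)%N)
  (hCs : forall C, C \in Cs -> C != set0)
  (hth : forall C (d : lab P C), C \in Cs -> d \in Dset C -> th C d <= 0) :
  exists (lam_star : V -> R) (m_star : R),
    (* m_star = D(lam_star) = max_lambda D(lambda) *)
    is_D_value Cs Dset th lam_star m_star /\
    (forall (lam : V -> R) (m : R), is_D_value Cs Dset th lam m -> m <= m_star) /\
    (* m_star is the optimal value of the LP *)
    (exists yl yc, lp_feasible Cs Dset yl yc /\ lp_obj Cs Dset th yc = m_star) /\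
    (forall yl yc, lp_feasible Cs Dset yl yc -> m_star <= lp_obj Cs Dset th yc).
Proof.
pose K := ({ffun V * P -> bool} * {ffun zidx V P -> bool})%type.
pose a := fun k : K => Estar Cs Dset th k.1 k.2.
pose b := fun (k : K) (i : V) => \sum_p b2r R (k.1 (i, p)) - 1.
have lagrE : forall lam (k : K), lagr Cs Dset th lam k.1 k.2 = a k + \sum_(i in [set: V]) b k i * lam i.
  move=> lam k; rewrite /lagr; congr (_ + _).
  apply: eq_big => [i|i _]; first by rewrite in_setT.
  by rewrite mulrC.
case/card_gt0P: hP => p0 _.
pose y0 := [ffun ip : V * P => ip.2 == p0].
pose z0 := [ffun _ : zidx V P => false].
have lagr0 : forall lam, lagr Cs Dset th lam y0 z0 = 0.
  move=> lam; rewrite /lagr EstarE.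
  rewrite big1 ?add0r; last first.
    move=> C _; apply: big1 => d _; by rewrite termE ffunE /= mulr0 mulr0.
  apply: big1 => i _.
  rewrite (bigD1 p0) //= big1 ?ffunE /= ?eqxx ?addr0 ?subrr ?mulr0 //.
  by move=> p /negbTE hp; rewrite ffunE /= hp.
have hK : (0 < #|{: K}|)%N by apply/card_gt0P; exists (y0, z0).
case: (@FM R V #|[set: V]| [set: V] erefl K a b hK) => [Hun | [l [mu [mu0 [mu1 [mub mua]]]]]].
  have [l hl] := Hun 1; have := hl (y0, z0).
  by rewrite -lagrE lagr0 ler10.
have hmin : forall y z, \sum_k mu k * a k <= lagr Cs Dset th l y z.
  by move=> y z; rewrite (lagrE l (y, z)); exact: mua (y, z).
have avg : forall lam, \sum_k mu k * lagr Cs Dset th lam k.1 k.2 = \sum_k mu k * a k.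
  move=> lam; under eq_bigr do rewrite lagrE mulrDr.
  rewrite big_split /= [X in _ + X](_ : _ = 0) ?addr0 //.
  under eq_bigr do rewrite mulr_sumr.
  rewrite exchange_big /=; apply: big1 => i iV.
  transitivity ((\sum_k mu k * b k i) * lam i); last by rewrite mub // mul0r.
  by rewrite mulr_suml; apply: eq_bigr => k _; rewrite mulrA.
set ms := \sum_k mu k * a k in hmin avg.
case: (@arg_minP _ _ _ (y0, z0) predT (fun k : K => lagr Cs Dset th l k.1 k.2) isT) => km _ Hkm.
have kmE : lagr Cs Dset th l km.1 km.2 = ms.
  apply/eqP; rewrite eq_le hmin andbT.
  have : \sum_k mu k * lagr Cs Dset th l km.1 km.2 <= \sum_k mu k * lagr Cs Dset th l k.1 k.2.
    by apply: ler_sum => k _; apply: ler_wpM2l; [exact: mu0 | exact: Hkm].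
  by rewrite -mulr_suml mu1 mul1r avg.
have wd : forall yl yc, lp_feasible Cs Dset yl yc -> ms <= lp_obj Cs Dset th yc.
  move=> yl yc [h1 [h2 [h3 h4]]].
  have := @round R V P Cs Dset th hth l ms hmin #|{: V * P}| (fun ip => yl ip.1 ip.2) yc (max_card _) (fun ip => h1 ip.1 ip.2).
  have -> : Psi Cs Dset th l (fun ip => yl ip.1 ip.2) yc = lp_obj Cs Dset th yc.
    rewrite /Psi /lp_obj [X in _ + X]big1 ?addr0 // => i _ /=; by rewrite h4 subrr mulr0.
  apply => C d hC hd; split; first by have /andP[_ ->] := h2 C d hC hd.
  exact: h3.
exists l, ms; split; [|split; [|split]].
- split; last exact: hmin.
  by exists km.1, km.2.
- move=> lam m [_ Hm].
  have : \sum_k mu k * m <= \sum_k mu k * lagr Cs Dset th lam k.1 k.2.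
    by apply: ler_sum => k _; apply: ler_wpM2l; [exact: mu0 | exact: Hm].
  by rewrite -mulr_suml mu1 mul1r avg.
- pose yl := fun i p => \sum_k mu k * b2r R (k.1 (i, p)).
  pose yc := fun C (d : lab P C) => \sum_k mu k * b2r R (k.2 (Tagged (fun C => lab P C) d) && [forall l0 : {i | i \in C}, k.1 (val l0, d l0)]).
  have avg01 : forall f : K -> bool, 0 <= \sum_k mu k * b2r R (f k) <= 1.
    move=> f; apply/andP; split; first by apply: sumr_ge0 => k _; apply: mulr_ge0 (mu0 k) (b2r_ge0 _ _).
    rewrite -mu1; apply: ler_sum => k _; rewrite -[leRHS]mulr1; apply: ler_wpM2l; [exact: mu0 | exact: b2r_le1].
  have feas : lp_feasible Cs Dset yl yc.
    split; [|split; [|split]].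
    - by move=> i p; apply: avg01.
    - by move=> C d _ _; apply: avg01.
    - move=> C d _ _ l0; apply: ler_sum => k _; apply: ler_wpM2l; first exact: mu0.
      case: (k.2 _) => //=; case: (boolP [forall _, _]) => [/forallP fa|]; last by rewrite b2rF b2r_ge0.
      by rewrite fa.
    - move=> i; rewrite /yl exchange_big /=.
      transitivity (\sum_k (mu k * b k i + mu k)).
        by apply: eq_bigr => k _; rewrite /b -mulr_sumr; ring.
      by rewrite big_split /= mub ?in_setT // mu1 add0r.
  exists yl, yc; split => //.
  apply/eqP; rewrite eq_le (wd yl yc feas) andbT.
  have -> : lp_obj Cs Dset th yc = \sum_k mu k * (\sum_(C in Cs) \sum_(d in Dset C)
        th C d * b2r R (k.2 (Tagged (fun C => lab P C) d) && [forall l0 : {i | i \in C}, k.1 (val l0, d l0)])).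
    rewrite /lp_obj; symmetry.
    under eq_bigr => k _ do rewrite mulr_sumr.
    rewrite exchange_big /=; apply: eq_bigr => C _.
    under eq_bigr => k _ do rewrite mulr_sumr.
    rewrite exchange_big /=; apply: eq_bigr => d _.
    rewrite /yc mulr_sumr; apply: eq_bigr => k _; ring.
  rewrite /ms; apply: ler_sum => k _; apply: ler_wpM2l; first exact: mu0.
  rewrite /a EstarE; apply: ler_sum => C hC; apply: ler_sum => d hd.
  exact: T1 (hth C d hC hd).
- exact: wd.
Qed.
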